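(* For any two knots $K$ and $K'$, $$d_{D}(K,K') \leq d_{X}(K,K') \leq 2\,d_{D}(K,K').$$
   Context: A diagonal move (D-move) is a local move on a knot diagram defined as follows. Consider a disk in which the diagram consists of four arcs $a,b,c,d$ arranged in a ''$\#$'' pattern: $a$ and $c$ do not meet each other, $b$ and $d$ do not meet each other, and each of $a,c$ crosses each of $b,d$ exactly once, giving four crossings labelled $1,2,3,4$ in cyclic order around the central square. The pairs $\{1,3\}$ and $\{2,4\}$ are the diagonal crossing pairs. A diagonal move changes the over/under information at both crossings of one diagonal pair and leaves the rest of the diagram unchanged; it is allowed for every choice of orientations of the arcs. For an unknotting operation $O$ and knots $K,K'$, the distance $d_O(K,K')$ is the minimum number of applications of $O$ needed (together with any number of Reidemeister moves) to transform a diagram of $K$ into a diagram of $K'$, the minimum being taken over all diagrams of $K$ and $K'$. Here $d_D$ is this distance for the diagonal move and $d_X$ is this distance for the crossing change. *)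

(* Defs.v *)
From Stdlib Require Import Relations.
From mathcomp Require Import all_boot.

Set Implicit Arguments.
Unset Strict Implicit.
Unset Printing Implicit Defensive.

(* A diagram: a finite set of darts (half-edges).  [rot] is the rotation
   (counterclockwise successor of a dart around its crossing), [edg] pairs the
   two darts of an edge, [ovr d] says that the strand of [d] at its crossing
   is the over-strand.  The two darts [d] and [rot (rot d)] are opposite at the
   crossing, i.e. lie on the same strand.  The diagram with no darts is the
   crossingless circle. *)
Record diag := Diag {
  dart : finType;
  rot : dart -> dart;
  edg : dart -> dart;
  ovr : dart -> bool }.

Section DiagDefs.
Variable D : diag.

Definition vtx (d : dart D) : pred (dart D) := fun y =>
  [|| y == d, y == rot d, y == rot (rot d) | y == rot (rot (rot d))].

(* face permutation: faces are the orbits of [fface] *)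
Definition fface (d : dart D) : dart D := rot (edg d).

Definition fstraight (d : dart D) : dart D := edg (rot (rot d)).

(* A valid knot diagram: either the crossingless circle, or a connected
   4-valent map on the sphere (Euler characteristic V - E + F = 2 with
   V = N/4, E = N/2 for N darts, i.e. 4F = N + 8) whose straight-ahead
   curve has exactly one component (two oriented traversals). *)
Definition valid : Prop :=
  #|dart D| = 0 \/
  [/\ [/\ forall d : dart D, rot (rot (rot (rot d))) = d,
          forall d : dart D, rot (rot d) != d,
          forall d : dart D, edg (edg d) = d
        & forall d : dart D, edg d != d],
      [/\ forall d : dart D, ovr (rot (rot d)) = ovr d
        & forall d : dart D, ovr (rot d) = ~~ ovr d],
      forall d e : dart D, connect [rel x y | (y == rot x) || (y == edg x)] d e,
      4 * fcard fface (dart D) = #|dart D| + 8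
    & fcard fstraight (dart D) = 2 ].
End DiagDefs.

(* [del D' S D]: D is obtained from D' by deleting the (rot-closed) set S of
   darts (a union of crossings), each strand passing straight through the
   deleted crossings, and reconnecting the strand ends. *)
Definition del (D' : diag) (S : pred (dart D')) (D : diag) : Prop :=
  exists i : dart D -> dart D',
  [/\ injective i,
      (forall y, S y \/ exists x, i x = y) /\ (forall x, ~~ S (i x)),
      forall x, rot (i x) = i (rot x),
      forall x, ovr (i x) = ovr x
    & forall x, exists k,
        i (edg x) = iter k ((@fstraight D')) (edg (i x)) /\
        forall j, j < k -> S (iter j ((@fstraight D')) (edg (i x)))].

Arguments del : clear implicits.

(* planar isotopy on S^2: isomorphism of diagrams (orientation preserving) *)
Definition iso (D D' : diag) : Prop := del D' (fun _ => false) D.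

(* Reidemeister I: delete a crossing carrying a monogon (a kink) *)
Definition R1 (D' D : diag) : Prop :=
  exists p : dart D', edg p = rot p /\ del D' (vtx p) D.

(* Reidemeister II: delete the two distinct crossings of a bigon face along
   which the same strand is over at both crossings *)
Definition R2 (D' D : diag) : Prop :=
  exists p : dart D',
  [/\ fface (fface p) = p,
      ~~ vtx p (edg p),
      ovr p = ovr (edg p)
    & del D' (fun y => vtx p y || vtx (edg p) y) D].

Definition swap2 (T : eqType) (a b x : T) : T :=
  if x == a then b else if x == b then a else x.

(* Reidemeister III: a triangular face with three distinct crossings, not
   alternating (some strand is over at both of its crossings of the
   triangle); the move reverses the order of the crossings along each of the
   three strands, i.e. each strand exchanges its two external ends. *)
Definition R3 (D D' : diag) : Prop :=
  exists t : dart D,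
  let t1 := fface t in let t2 := fface t1 in
  let sw x := swap2 (rot (rot t)) (rot (rot (edg t)))
             (swap2 (rot (rot t1)) (rot (rot (edg t1)))
             (swap2 (rot (rot t2)) (rot (rot (edg t2))) x)) in
  [/\ fface t2 = t,
      [&& ~~ vtx t t1, ~~ vtx t t2 & ~~ vtx t1 t2],
      [\/ ovr t = ovr (edg t), ovr t1 = ovr (edg t1)
        | ovr t2 = ovr (edg t2)]
    & exists f : dart D -> dart D',
      [/\ bijective f,
          forall x, f (rot x) = rot (f x),
          forall x, ovr (f x) = ovr x
        & forall x, edg (f x) = f (sw (edg (sw x)))]].

Definition rstep (D D' : diag) : Prop :=
  valid D /\ valid D' /\ [\/ iso D D', R1 D D' \/ R1 D' D, R2 D D' \/ R2 D' D | R3 D D' \/ R3 D' D].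

Definition req : relation diag := clos_refl_sym_trans diag rstep.

Definition flipped (D D' : diag) (A : pred (dart D)) : Prop :=
  exists f : dart D -> dart D',
  [/\ bijective f,
      forall x, f (rot x) = rot (f x),
      forall x, f (edg x) = edg (f x)
    & forall x, ovr (f x) = ovr x (+) A x].

Arguments flipped : clear implicits.

Definition Xmove (D D' : diag) : Prop :=
  valid D /\ valid D' /\ exists d : dart D, flipped D D' (vtx d).

(* diagonal move: a square face with four distinct crossings (the # pattern);
   change the crossings at one diagonal pair *)
Definition Dmove (D D' : diag) : Prop :=
  valid D /\ valid D' /\
  exists t : dart D,
  let t1 := fface t in let t2 := fface t1 in let t3 := fface t2 in
  [/\ fface t3 = t,
      [&& ~~ vtx t t1, ~~ vtx t t2, ~~ vtx t t3, ~~ vtx t1 t2, ~~ vtx t1 t3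
        & ~~ vtx t2 t3]
    & flipped D D' (fun y => vtx t y || vtx t2 y)].

Fixpoint reach (M : diag -> diag -> Prop) (k : nat) (D D' : diag) : Prop :=
  match k with
  | 0 => req D D'
  | k'.+1 => exists E E', [/\ req D E, M E E' & reach M k' E' D']
  end.

(* d_M(K, K') <= n, where K, K' are the knots of D, D' *)
Definition dist_le (M : diag -> diag -> Prop) (D D' : diag) (n : nat) : Prop :=
  exists k, k <= n /\ reach M k D D'.

(* Main.v *)
Require Import Defs.
From Stdlib Require Import Relations.
From mathcomp Require Import all_boot.
From HB Require Import structures.
From mathcomp Require Import fingroup perm.
From mathcomp Require Import zify.
Import Defs.
Set Implicit Arguments.
Unset Strict Implicit.
Unset Printing Implicit Defensive.

Local Open Scope group_scope.

Section PermCount.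
Variable T : finType.

Lemma porbit_fconnect (s : {perm T}) x y : (y \in porbit s x) = fconnect s x y.
Proof.
apply/porbitP/idP => [[i ->]|].
  by rewrite permX fconnect_iter.
move=> /iter_findex <-; exists (findex s x y); by rewrite permX.
Qed.

Lemma fcard_porbits (s : {perm T}) : fcard s T = #|porbits s|.
Proof.
have sym : connect_sym (frel s) by move=> x y; apply: fconnect_sym; apply: perm_inj.
rewrite /n_comp_mem /porbits.
have -> : porbit s @: T = porbit s @: [pred x | roots (frel s) x].
  apply/setP => P; apply/imsetP/imsetP => [[x _ ->]|[x _ ->]]; last by exists x.
  exists (root (frel s) x); first by rewrite inE roots_root.
  apply/setP => z; rewrite !porbit_fconnect.
  apply: same_connect => //; exact: connect_root.
rewrite card_in_imset; first by apply: eq_card => x; rewrite !inE andbT.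
move=> x y; rewrite !inE => /eqP rx /eqP ry Pxy.
rewrite -rx -ry; apply/(rootP sym).
by rewrite -porbit_fconnect Pxy porbit_id.
Qed.

Lemma porbit_fixed (s : {perm T}) y : s y = y -> porbit s y = [set y].
Proof.
move=> sy; apply/setP => z; rewrite inE; apply/porbitP/eqP => [[i ->]|->].
  by elim: i => [|i IH]; rewrite ?expg0 ?perm1 // expgSr permM IH sy.
by exists 0; rewrite expg0 perm1.
Qed.

Lemma porbits_merge (s : {perm T}) x y : s y = y -> x != y ->
  #|porbits (tperm x y * s)|.+1 = #|porbits s|.
Proof.
move=> sy xy; have := porbits_mul_tperm s x y.
by rewrite porbit_fixed // inE xy /= addn1 addn2 => -[].
Qed.

Lemma porbits_split (s : {perm T}) x y : x \in porbit s y -> x != y ->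
  #|porbits (tperm x y * s)| = #|porbits s|.+1.
Proof.
move=> xs xy; have := porbits_mul_tperm s x y.
by rewrite xs xy /= addn0 addn1.
Qed.

End PermCount.

Section Ext.
Variables (T N : finType) (f : T -> T).
Definition extf (u : T + N) : T + N :=
  match u with inl x => inl (f x) | inr n => inr n end.
Hypothesis fi : injective f.
Lemma extf_inj : injective extf.
Proof. by move=> [x|n] [y|m] //= [E]; rewrite ?(fi E) ?E. Qed.

Lemma porbits_ext : #|porbits (perm extf_inj)| = #|porbits (perm fi)| + #|N|.
Proof.
set s := perm extf_inj; set p := perm fi.
have Hl x : porbit s (inl x) = inl @: porbit p x.
  apply/setP => u; rewrite porbit_fconnect; apply/idP/imsetP.
    move=> /iter_findex; move: (findex _ _ _) => k <-.
    exists (iter k p x); first by rewrite porbit_fconnect fconnect_iter.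
    by elim: k => //= k ->; rewrite permE /= permE.
  move=> [y]; rewrite porbit_fconnect => /iter_findex; move: (findex _ _ _) => k <- ->.
  suff -> : inl (iter k p x) = iter k s (inl x) by apply: fconnect_iter.
  by elim: k => //= k <-; rewrite permE /= permE.
have Hr n : porbit s (inr n) = [set inr n] by apply: porbit_fixed; rewrite permE.
have -> : porbits s = [set (@inl T N) @: (P : {set T}) | P in porbits p] :|: [set [set (@inr T N n)] | n : N].
  apply/setP => P; rewrite inE; apply/imsetP/orP => [[[x|n] _ ->]|[/imsetP[Q /imsetP[x _ ->] ->]|/imsetP[n _ ->]]].
  - by left; apply/imsetP; exists (porbit p x); rewrite ?Hl // imset_f.
  - by right; rewrite Hr imset_f.
  - by exists (inl x) => //; rewrite Hl.
  - by exists (inr n) => //; rewrite Hr.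
rewrite cardsU.
have -> : [set (@inl T N) @: (P : {set T}) | P in porbits p] :&: [set [set (@inr T N n)] | n : N] = set0.
  apply/setP => P; rewrite !inE; apply/andP => -[/imsetP[Q /imsetP[x _ ->] ->] /imsetP[n _]].
  move/setP => /(_ (inr n)); rewrite inE eqxx => /imsetP[y _] //.
rewrite cards0 subn0 (card_imset (porbits p) (imset_inj (fun a b (E : @inl T N a = inl b) => (congr1 (fun u => if u is inl z then z else a) E)))).
rewrite (@card_imset _ _ (fun n : N => [set (@inr T N n)])) //.
move=> a b /setP /(_ (inr a)); rewrite !inE eqxx => /esym/eqP.
by case=> ->.
Qed.
End Ext.

Section FixTp.
Variable T : finType.
Lemma fix_tp (s : {perm T}) x y z : x != z -> y != z -> (tperm x y * s) z = s z.
Proof. by move=> xz yz; rewrite permM tpermD. Qed.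
End FixTp.

Lemma extf_inr (T N : finType) (f : T -> T) (fi : injective f) (n : N) :
  perm (@extf_inj T N f fi) (inr n) = inr n.
Proof. by rewrite permE. Qed.

Lemma count_ff (p7 p6 p5 p4 p3 p2 p1 pA p0 q F : nat) : p7.+1 = p6 -> p6.+1 = p5 -> p5.+1 = p4 ->
  p4.+1 = p3 -> p3.+1 = p2 -> p2.+1 = p1 -> p1.+1 = pA -> pA = p0.+1 -> p0 = q + (4 + 4) -> F = q -> p7 = F.+2.
Proof. lia. Qed.
Lemma count_fs (p8 p7 p6 p5 p4 p3 p2 p1 p0 q F : nat) : p8.+1 = p7 -> p7.+1 = p6 -> p6.+1 = p5 -> p5.+1 = p4 ->
  p4.+1 = p3 -> p3.+1 = p2 -> p2.+1 = p1 -> p1.+1 = p0 -> p0 = q + (4 + 4) -> F = q -> p8 = F.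
Proof. lia. Qed.
Local Close Scope group_scope.
Lemma count_kf (p3 p2 p1 p0 q F : nat) : p3.+1 = p2 -> p2.+1 = p1 -> p1.+1 = p0 -> p0 = q + 4 -> F = q -> p3 = F.+1.
Proof. lia. Qed.
Lemma count_ks (p4 p3 p2 p1 p0 q F : nat) : p4.+1 = p3 -> p3.+1 = p2 -> p2.+1 = p1 -> p1.+1 = p0 -> p0 = q + 4 -> F = q -> p4 = F.
Proof. lia. Qed.
Lemma arith_f1 F n : 4 * F = n + 8 -> 4 * F.+1 = (n + 4) + 8.
Proof. lia. Qed.
Lemma arith_f2 F n : 4 * F = n + 8 -> 4 * F.+2 = (n + (4 + 4)) + 8.
Proof. lia. Qed.

Inductive K4 := k0 | k1 | k2 | k3.
Definition k2o (k : K4) : 'I_4 := match k with k0 => @Ordinal 4 0 isT | k1 => @Ordinal 4 1 isT | k2 => @Ordinal 4 2 isT | k3 => @Ordinal 4 3 isT end.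
Definition o2k (i : 'I_4) : K4 := match val i with 0 => k0 | 1 => k1 | 2 => k2 | _ => k3 end.
Lemma k2oK : cancel k2o o2k. Proof. by case. Qed.
HB.instance Definition _ := Finite.copy K4 (can_type k2oK).
Lemma card_K4 : #|{: K4}| = 4.
Proof. have /card_uniqP H : uniq [:: k0; k1; k2; k3] by []. rewrite /= in H; rewrite -H; apply: eq_card; by case. Qed.

Definition valid2 (D : diag) : Prop :=
  [/\ [/\ forall d : dart D, rot (rot (rot (rot d))) = d,
          forall d : dart D, rot (rot d) != d,
          forall d : dart D, edg (edg d) = d
        & forall d : dart D, edg d != d],
      [/\ forall d : dart D, ovr (rot (rot d)) = ovr d
        & forall d : dart D, ovr (rot d) = ~~ ovr d],
      forall d e : dart D, connect [rel x y | (y == rot x) || (y == edg x)] d e,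
      4 * fcard (@fface D) (dart D) = #|dart D| + 8
    & fcard (@fstraight D) (dart D) = 2 ].

Lemma valid2_valid D : valid2 D -> valid D.
Proof. by right. Qed.

Lemma valid_valid2 D (d : dart D) : valid D -> valid2 D.
Proof. case=> // /card0_eq /(_ d); by rewrite inE. Qed.

Definition crel (D : diag) := [rel x y : dart D | (y == rot x) || (y == edg x)].

Lemma fcard_perm (U : finType) (g : U -> U) (P : {perm U}) :
  g =1 P -> fcard g U = #|porbits P|.
Proof. by move=> gP; rewrite (eq_fcard gP) fcard_porbits. Qed.

Lemma lift_connect (T U : finType) (eT : rel T) (eU : rel U) (i : T -> U) :
  (forall x y, eT x y -> connect eU (i x) (i y)) ->
  forall x y, connect eT x y -> connect eU (i x) (i y).
Proof.
move=> H x y /connectP[p]; elim: p x => [|z p IH] x /=; first by move=> _ ->.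
case/andP=> exz pz ly; apply: connect_trans (H _ _ exz) (IH _ pz ly).
Qed.

Section Basics.
Variable D : diag.
Hypothesis H4 : forall d : dart D, rot (rot (rot (rot d))) = d.
Hypothesis E2 : forall d : dart D, edg (edg d) = d.

Lemma rot_inj : injective (@rot D).
Proof. by apply: (can_inj (g := fun x => rot (rot (rot x)))) => x; rewrite H4. Qed.
Lemma edg_inj : injective (@edg D).
Proof. exact: (can_inj E2). Qed.
Lemma fface_inj : injective (@fface D).
Proof. by move=> x y /rot_inj /edg_inj. Qed.
Lemma fstraight_inj : injective (@fstraight D).
Proof. by move=> x y /edg_inj /rot_inj /rot_inj. Qed.

Lemma rot_eqL (x y : dart D) : (rot x == y) = (x == rot (rot (rot y))).
Proof. by apply/eqP/eqP => [<-|->]; rewrite H4. Qed.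

Lemma vtx_rot (d x : dart D) : vtx d (rot x) = vtx d x.
Proof.
rewrite /vtx rot_eqL !(inj_eq rot_inj).
by case: (x == d); case: (x == rot d); case: (x == rot (rot d)); case: (x == rot (rot (rot d))).
Qed.

Lemma vtx_rot2 (d x : dart D) : vtx (rot d) x = vtx d x.
Proof.
rewrite /vtx H4.
by case: (x == d); case: (x == rot d); case: (x == rot (rot d)); case: (x == rot (rot (rot d))).
Qed.

Lemma vtx_self (d : dart D) : vtx d d. Proof. by rewrite /vtx eqxx. Qed.

Lemma vtx_same (d x : dart D) : vtx d x -> vtx x =1 vtx d.
Proof.
move=> H y; move: H; rewrite {1}/vtx => /or4P[] /eqP ->; by rewrite ?vtx_rot2.
Qed.
End Basics.

Definition flip (D : diag) (A : pred (dart D)) : diag :=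
  @Diag (dart D) (@rot D) (@edg D) (fun x => ovr x (+) A x).
Arguments flip : clear implicits.

Lemma valid2_flip (D : diag) (A : pred (dart D)) : valid2 D -> (forall x, A (rot x) = A x) -> valid2 (flip D A).
Proof.
move=> [R [O1 O2] C F S] HA; split => //; split => d; rewrite /flip /=.
  by rewrite (O1 d) !HA.
by rewrite (O2 d) HA addNb.
Qed.

Lemma inlE1 (T U : eqType) (x y : T) : (@inl T U x == inl y) = (x == y). Proof. by []. Qed.
Lemma inrE1 (T U : eqType) (x y : U) : (@inr T U x == inr y) = (x == y). Proof. by []. Qed.
Lemma inlrE1 (T U : eqType) (x : T) (y : U) : (@inl T U x == inr y) = false. Proof. by []. Qed.
Lemma inrlE1 (T U : eqType) (x : T) (y : U) : (@inr T U y == inl x) = false. Proof. by []. Qed.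

Ltac hypfalse := repeat match goal with H : (?l == ?r) = false |- context [?l == ?r] => rewrite H end.

Ltac tp_inner sv :=
  match goal with
  | |- context [@fun_of_perm.body _ (@tperm _ ?x ?y) ?z] =>
      lazymatch z with
      | context [@fun_of_perm.body _ (@tperm _ _ _) _] => fail
      | _ => first [ rewrite (tpermL x y) | rewrite (tpermR x y)
                   | rewrite (tpermD (x := x) (y := y) (z := z)); [ | sv | sv ] ]
      end
  end.

Ltac split_on x y :=
  let H := fresh "nx" in let H' := fresh "nx" in
  let E := fresh "Ex" in
  case: (x =P y) => [E|/eqP/negbTE H]; [subst x | have H' := H; rewrite eq_sym in H'].

Definition r4 k := match k with k0 => k1 | k1 => k2 | k2 => k3 | k3 => k0 end.

Section Kink.
Variables (D : diag) (e : dart D).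
Definition kd := (dart D + K4)%type.
Definition krot (u : kd) : kd := match u with inl x => inl (rot x) | inr k => inr (r4 k) end.
Definition kedg (u : kd) : kd := match u with
 | inl x => if x == e then inr k0 else if x == edg e then inr k1 else inl (edg x)
 | inr k0 => inl e | inr k1 => inl (edg e) | inr k2 => inr k3 | inr k3 => inr k2 end.
Definition kovr (u : kd) := match u with inl x => ovr x | inr k => (k == k0) || (k == k2) end.
Definition kinkO (o : kd -> bool) := @Diag kd krot kedg o.
Definition kink := kinkO kovr.

Hypothesis V : valid2 D.

Let H4 : forall d : dart D, rot (rot (rot (rot d))) = d. Proof. by case: V => [[]]. Qed.
Let R2 : forall d : dart D, rot (rot d) != d. Proof. by case: V => [[]]. Qed.
Let E2 : forall d : dart D, edg (edg d) = d. Proof. by case: V => [[]]. Qed.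
Let E1 : forall d : dart D, edg d != d. Proof. by case: V => [[]]. Qed.

Let ee : (edg e == e) = false. Proof. exact/negbTE/E1. Qed.
Let ee' : (e == edg e) = false. Proof. by rewrite eq_sym ee. Qed.

Let inlE (a b : dart D) : (@inl _ K4 a == inl b) = (a == b). Proof. by []. Qed.

Lemma kink_faces : fcard (@fface kink) (dart kink) = (fcard (@fface D) (dart D)).+1.
Proof.
pose s0 := perm (@extf_inj _ K4 _ (fface_inj H4 E2)).
pose s1 := (tperm (inl e) (inr k1) * s0)%g.
pose s2 := (tperm (inl (edg e)) (inr k2) * s1)%g.
pose P := (tperm (inr k2) (inr k0) * s2)%g.
rewrite (fcard_perm (P := P)).
  have c1 : #|porbits P|.+1 = #|porbits s2| by apply: porbits_merge; rewrite ?permM ?tpermD ?permE.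
  have c2 : #|porbits s2|.+1 = #|porbits s1| by apply: porbits_merge; rewrite ?permM ?tpermD ?permE.
  have c3 : #|porbits s1|.+1 = #|porbits s0| by apply: porbits_merge; rewrite ?permM ?tpermD ?permE.
  have c0 := porbits_ext K4 (fface_inj H4 E2).
  have c4 : fcard (@fface D) (dart D) = #|porbits (perm (fface_inj H4 E2))|.
    by apply: fcard_perm => x; rewrite permE.
  rewrite card_K4 in c0; exact: count_kf c1 c2 c3 c0 c4.
move=> u; rewrite /P !permM !permE.
case: u => [x|[]] //=; rewrite /fface /= ?tpermD ?permE //=.
  rewrite !inlE; have [->|ne1] := eqVneq x e; first by rewrite ee' /= eqxx.
  case: (x =P edg e) => [Ex|ne2]; first by subst x; rewrite /= ?eqxx.
  by rewrite /= ?inlE (negbTE ne1).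
by rewrite inlE ee /= E2.
Qed.
Let rot2_eq (x y : dart D) : (rot (rot x) == y) = (x == rot (rot y)).
Proof. by apply/eqP/eqP => [<-|->]; rewrite H4. Qed.

Lemma kink_straight : fcard (@fstraight kink) (dart kink) = fcard (@fstraight D) (dart D).
Proof.
pose xe := rot (rot e); pose xe' := rot (rot (edg e)).
pose s0 := perm (@extf_inj _ K4 _ (fstraight_inj H4 E2)).
pose s1 := (tperm (inl xe) (inr k0) * s0)%g.
pose s2 := (tperm (inr k0) (inr k3) * s1)%g.
pose s3 := (tperm (inl xe') (inr k1) * s2)%g.
pose P := (tperm (inr k1) (inr k2) * s3)%g.
have xexe' : (xe == xe') = false.
  by rewrite /xe /xe' rot2_eq H4 ee'.
rewrite (fcard_perm (P := P)).
  have c1 : #|porbits P|.+1 = #|porbits s3| by apply: porbits_merge; rewrite ?permM ?tpermD ?permE.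
  have c2 : #|porbits s3|.+1 = #|porbits s2| by apply: porbits_merge; rewrite ?permM ?tpermD ?permE.
  have c3 : #|porbits s2|.+1 = #|porbits s1| by apply: porbits_merge; rewrite ?permM ?tpermD ?permE.
  have c5 : #|porbits s1|.+1 = #|porbits s0| by apply: porbits_merge; rewrite ?permM ?tpermD ?permE.
  have c0 := porbits_ext K4 (fstraight_inj H4 E2).
  have c4 : fcard (@fstraight D) (dart D) = #|porbits (perm (fstraight_inj H4 E2))|.
    by apply: fcard_perm => x; rewrite permE.
  rewrite card_K4 in c0; exact: count_ks c1 c2 c3 c5 c0 c4.
move=> u; rewrite /P !permM !permE.
case: u => [x|[]] //=; rewrite /fstraight /= ?tpermD ?permE //=.
- rewrite !inlE rot2_eq -/xe.
  case: (x =P xe') => [Ex|ne2].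
    by subst x; rewrite eq_sym xexe' /= rot2_eq /xe' eqxx.
  rewrite /= inlE; case: (x =P xe) => [Ex|ne1] //=.
  by rewrite rot2_eq -/xe' (introF eqP ne2).
- by rewrite inlE eq_sym xexe' /xe' /= !H4 E2.
- by rewrite /xe !H4.
Qed.
Ltac sc := rewrite /= ?eqxx ?ee ?E2 ?eqxx ?orbT //.

Lemma valid2_kink : valid2 kink.
Proof.
have [[_ _ _ _] [O1 O2] C F S] := V.
split.
- split.
  + by case=> [x|[]] //=; rewrite H4.
  + by case=> [x|[]] //=; rewrite inlE R2.
  + case=> [x|[]] /=; rewrite ?eqxx ?ee ?eqxx //.
    case: (x =P e) => [->|ne1] //=; case: (x =P edg e) => [->|ne2] //=.
    rewrite (inj_eq (edg_inj E2)) (introF eqP ne1).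
    by rewrite -{1}(E2 e) (inj_eq (edg_inj E2)) (introF eqP ne2) E2.
  + case=> [x|[]] //=; case: (x =P e) => [->|ne1] //=; case: (x =P edg e) => [->|ne2] //=.
    by rewrite inlE E1.
- by split; case=> [x|[]] //=.
- have step (u v : kd) : (v == krot u) || (v == kedg u) -> connect (@crel kink) u v.
    by move=> h; apply: connect1.
  have L : forall x y, connect (@crel D) x y -> connect (@crel kink) (inl x) (inl y).
    apply: lift_connect => x y /orP[/eqP ->|/eqP ->]; first by apply: step; sc.
    case: (x =P e) => [->|ne1].
      apply: (connect_trans (step _ (inr k0) _)); first by sc.
      apply: (connect_trans (step _ (inr k1) _)); first by sc.
      by apply: step; sc.
    case: (x =P edg e) => [->|ne2].
      apply: (connect_trans (step _ (inr k1) _)); first by sc.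
      apply: (connect_trans (step _ (inr k2) _)); first by sc.
      apply: (connect_trans (step _ (inr k3) _)); first by sc.
      apply: (connect_trans (step _ (inr k0) _)); first by sc.
      by apply: step; sc.
    by apply: step; rewrite /= (introF eqP ne1) (introF eqP ne2) eqxx orbT.
  have To u : connect (@crel kink) (inl e) u.
    case: u => [x|k]; first by apply: L.
    apply: (connect_trans (step _ (inr k0) _)); first by sc.
    case: k => //.
    + by apply: step; sc.
    + apply: (connect_trans (step _ (inr k1) _)); first by sc.
      by apply: step; sc.
    + apply: (connect_trans (step _ (inr k1) _)); first by sc.
      apply: (connect_trans (step _ (inr k2) _)); first by sc.
      by apply: step; sc.
  have From u : connect (@crel kink) u (inl e).
    case: u => [x|k]; first by apply: L.
    have h0 : connect (@crel kink) (inr k0) (inl e) by apply: step; sc.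
    have h3 : connect (@crel kink) (inr k3) (inl e).
      by apply: (connect_trans (step _ (inr k0) _)) => //; sc.
    have h2 : connect (@crel kink) (inr k2) (inl e).
      by apply: (connect_trans (step _ (inr k3) _)) => //; sc.
    case: k => //.
    by apply: (connect_trans (step _ (inr k2) _)) => //; sc.
  by move=> u v; apply: connect_trans (From u) (To v).
- by rewrite kink_faces card_sum card_K4; apply: arith_f1.
- by rewrite kink_straight.
Qed.
Lemma R1_kink (o : kd -> bool) : (forall x, o (inl x) = ovr x) -> R1 (kinkO o) D.
Proof.
move=> Ho; exists (inr k2); split => //.
exists inl; split => //.
- by move=> x y [].
- split; first by case=> [x|k]; [right; exists x|left; case: k].
  by [].
- move=> x /=; case: (x =P e) => [->|ne1].
    by exists 2; split => //; case=> [|[]].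
  case: (x =P edg e) => [->|ne2].
    by exists 2; split; [rewrite /= E2|case=> [|[]]].
  by exists 0.
Qed.
End Kink.

Definition N8 := (K4 + K4)%type.

Section Finger.
Variables (D : diag) (a : dart D).
Let b := rot a.
Let a' := edg a.
Let b' := edg (rot a).
Definition fd := (dart D + N8)%type.
Notation Q k := (@inr (dart D) N8 (inl k)).
Notation R k := (@inr (dart D) N8 (inr k)).
Definition frot (u : fd) : fd := match u with
  | inl x => inl (rot x) | inr (inl k) => Q (r4 k) | inr (inr k) => R (r4 k) end.
Definition fedg (u : fd) : fd := match u with
  | inl x => if x == a then Q k0 else if x == rot a then Q k3
             else if x == edg a then R k2 else if x == edg (rot a) then R k3 else inl (edg x)
  | inr (inl k0) => inl a | inr (inl k3) => inl (rot a)
  | inr (inl k2) => R k0 | inr (inr k0) => Q k2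
  | inr (inl k1) => R k1 | inr (inr k1) => Q k1
  | inr (inr k2) => inl (edg a) | inr (inr k3) => inl (edg (rot a)) end.
Definition fovr (u : fd) := match u with
  | inl x => ovr x | inr (inl k) => (k == k0) || (k == k2) | inr (inr k) => (k == k0) || (k == k2) end.
Definition fingerO (o : fd -> bool) := @Diag fd frot fedg o.
Definition finger := fingerO fovr.

Hypothesis V : valid2 D.
Hypothesis Ha : edg a != rot a.

Let H4 : forall d : dart D, rot (rot (rot (rot d))) = d. Proof. by case: V => [[]]. Qed.
Let R2n : forall d : dart D, rot (rot d) != d. Proof. by case: V => [[]]. Qed.
Let E2 : forall d : dart D, edg (edg d) = d. Proof. by case: V => [[]]. Qed.
Let E1 : forall d : dart D, edg d != d. Proof. by case: V => [[]]. Qed.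
Let inlE := (inlE1, inrE1, inlrE1, inrlE1).

Let rotn (x : dart D) : (rot x == x) = false.
Proof. apply: negbTE; apply/eqP => h; move: (R2n x); by rewrite h h eqxx. Qed.
Let edgI := edg_inj E2.
Let ab : (a == rot a) = false. Proof. by rewrite eq_sym rotn. Qed.
Let aa' : (a == edg a) = false. Proof. by rewrite eq_sym (negbTE (E1 a)). Qed.
Let ab' : (a == edg (rot a)) = false.
Proof. by rewrite -{1}(E2 a) (inj_eq edgI) (negbTE Ha). Qed.
Let ba' : (rot a == edg a) = false. Proof. by rewrite eq_sym (negbTE Ha). Qed.
Let bb' : (rot a == edg (rot a)) = false. Proof. by rewrite eq_sym (negbTE (E1 _)). Qed.
Let a'b' : (edg a == edg (rot a)) = false. Proof. by rewrite (inj_eq edgI) ab. Qed.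
Let ba : (rot a == a) = false. Proof. by rewrite eq_sym. Qed.
Let a'a : (edg a == a) = false. Proof. by rewrite eq_sym. Qed.
Let b'a : (edg (rot a) == a) = false. Proof. by rewrite eq_sym. Qed.
Let a'b : (edg a == rot a) = false. Proof. by rewrite eq_sym. Qed.
Let b'b : (edg (rot a) == rot a) = false. Proof. by rewrite eq_sym. Qed.
Let b'a' : (edg (rot a) == edg a) = false. Proof. by rewrite eq_sym. Qed.

Ltac dis := rewrite ?ab ?aa' ?ab' ?ba' ?bb' ?a'b' ?ba ?a'a ?b'a ?a'b ?b'b ?b'a'.
Ltac sv := by (do 3 (rewrite ?inlE1 ?inrE1 ?inlrE1 ?inrlE1 ?eqxx ?E2 ?H4 /=; hypfalse)).
Ltac ev := do 8 (rewrite ?inlE ?eqxx ?E2 /=; dis).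

Lemma finger_faces : fcard (@fface finger) (dart finger) = (fcard (@fface D) (dart D)).+2.
Proof.
pose s0 := perm (@extf_inj _ N8 _ (fface_inj H4 E2)).
pose sA := (tperm (inl (rot a)) (inl (edg a)) * s0)%g.
pose s1 := (tperm (inl a) (Q k1) * sA)%g.
pose s2 := (tperm (Q k1) (R k2) * s1)%g.
pose s3 := (tperm (inl (rot a)) (Q k0) * s2)%g.
pose s4 := (tperm (inl (edg a)) (R k3) * s3)%g.
pose s5 := (tperm (inl (edg (rot a))) (R k0) * s4)%g.
pose s6 := (tperm (R k0) (Q k3) * s5)%g.
pose P := (tperm (Q k2) (R k1) * s6)%g.
rewrite (fcard_perm (P := P)).
  have c7 : #|porbits P|.+1 = #|porbits s6| by apply: porbits_merge; rewrite ?fix_tp ?extf_inr.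
  have c6 : #|porbits s6|.+1 = #|porbits s5| by apply: porbits_merge; rewrite ?fix_tp ?extf_inr.
  have c5 : #|porbits s5|.+1 = #|porbits s4| by apply: porbits_merge; rewrite ?fix_tp ?extf_inr.
  have c4 : #|porbits s4|.+1 = #|porbits s3| by apply: porbits_merge; rewrite ?fix_tp ?extf_inr.
  have c3 : #|porbits s3|.+1 = #|porbits s2| by apply: porbits_merge; rewrite ?fix_tp ?extf_inr.
  have c2 : #|porbits s2|.+1 = #|porbits s1| by apply: porbits_merge; rewrite ?fix_tp ?extf_inr.
  have c1 : #|porbits s1|.+1 = #|porbits sA| by apply: porbits_merge; rewrite ?fix_tp ?extf_inr.
  have cA : #|porbits sA| = #|porbits s0|.+1.
    apply: porbits_split; last by rewrite inlE ba'.
    apply/porbitP; exists 1; by rewrite expg1 permE /= /fface E2.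
  have c0 := porbits_ext N8 (fface_inj H4 E2).
  have c8 : fcard (@fface D) (dart D) = #|porbits (perm (fface_inj H4 E2))|.
    by apply: fcard_perm => x; rewrite permE.
  rewrite card_sum card_K4 in c0; exact: count_ff c7 c6 c5 c4 c3 c2 c1 cA c0 c8.
move=> u; rewrite /P !permM.
have f1 := ab; have f2 := aa'; have f3 := ab'; have f4 := ba'; have f5 := bb'; have f6 := a'b'.
have f7 := ba; have f8 := a'a; have f9 := b'a; have f10 := a'b; have f11 := b'b; have f12 := b'a'.
case: u => [x|[[]|[]]].
  split_on x a; last split_on x (rot a); last split_on x (edg a); last split_on x (edg (rot a)).
  all: repeat tp_inner ltac:(sv).
  all: rewrite /s0 permE /fface /=; sv.
all: repeat tp_inner ltac:(sv).
all: rewrite /s0 permE /fface /=; sv.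
Qed.
Let rot2_eq (x y : dart D) : (rot (rot x) == y) = (x == rot (rot y)).
Proof. by apply/eqP/eqP => [<-|->]; rewrite H4. Qed.
Let rotI := rot_inj H4.
Ltac sv2 := by (do 4 (rewrite ?inlE1 ?inrE1 ?inlrE1 ?inrlE1 ?eqxx ?E2 ?H4 ?(inj_eq rotI) ?(inj_eq edgI) /=; hypfalse)).

Lemma finger_straight : fcard (@fstraight finger) (dart finger) = fcard (@fstraight D) (dart D).
Proof.
pose s0 := perm (@extf_inj _ N8 _ (fstraight_inj H4 E2)).
pose s1 := (tperm (inl (rot (rot a))) (Q k0) * s0)%g.
pose s2 := (tperm (Q k0) (R k0) * s1)%g.
pose s3 := (tperm (inl (rot (rot (rot a)))) (Q k3) * s2)%g.
pose s4 := (tperm (Q k3) (R k1) * s3)%g.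
pose s5 := (tperm (inl (rot (rot (edg a)))) (R k2) * s4)%g.
pose s6 := (tperm (R k2) (Q k2) * s5)%g.
pose s7 := (tperm (inl (rot (rot (edg (rot a))))) (R k3) * s6)%g.
pose P := (tperm (R k3) (Q k1) * s7)%g.
rewrite (fcard_perm (P := P)).
  have c8 : #|porbits P|.+1 = #|porbits s7| by apply: porbits_merge; rewrite ?fix_tp ?extf_inr.
  have c7 : #|porbits s7|.+1 = #|porbits s6| by apply: porbits_merge; rewrite ?fix_tp ?extf_inr.
  have c6 : #|porbits s6|.+1 = #|porbits s5| by apply: porbits_merge; rewrite ?fix_tp ?extf_inr.
  have c5 : #|porbits s5|.+1 = #|porbits s4| by apply: porbits_merge; rewrite ?fix_tp ?extf_inr.
  have c4 : #|porbits s4|.+1 = #|porbits s3| by apply: porbits_merge; rewrite ?fix_tp ?extf_inr.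
  have c3 : #|porbits s3|.+1 = #|porbits s2| by apply: porbits_merge; rewrite ?fix_tp ?extf_inr.
  have c2 : #|porbits s2|.+1 = #|porbits s1| by apply: porbits_merge; rewrite ?fix_tp ?extf_inr.
  have c1 : #|porbits s1|.+1 = #|porbits s0| by apply: porbits_merge; rewrite ?fix_tp ?extf_inr.
  have c0 := porbits_ext N8 (fstraight_inj H4 E2).
  have c9 : fcard (@fstraight D) (dart D) = #|porbits (perm (fstraight_inj H4 E2))|.
    by apply: fcard_perm => x; rewrite permE.
  rewrite card_sum card_K4 in c0; exact: count_fs c8 c7 c6 c5 c4 c3 c2 c1 c0 c9.
move=> u; rewrite /P !permM.
have f1 := ab; have f2 := aa'; have f3 := ab'; have f4 := ba'; have f5 := bb'; have f6 := a'b'.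
have f7 := ba; have f8 := a'a; have f9 := b'a; have f10 := a'b; have f11 := b'b; have f12 := b'a'.
case: u => [x|[[]|[]]].
  split_on x (rot (rot a)); last split_on x (rot (rot (rot a))); last split_on x (rot (rot (edg a))); last split_on x (rot (rot (edg (rot a)))).
  all: repeat tp_inner ltac:(sv2).
  all: rewrite /s0 permE /fstraight /= ?rot2_eq; sv2.
all: repeat tp_inner ltac:(sv2).
all: rewrite /s0 permE /fstraight /=; sv2.
Qed.
Let edg_eqL (x y : dart D) : (edg x == y) = (x == edg y).
Proof. by apply/eqP/eqP => [<-|->]; rewrite E2. Qed.

Lemma valid2_finger : valid2 finger.
Proof.
have [[_ _ _ _] [O1 O2] C F S] := V.
have f1 := ab; have f2 := aa'; have f3 := ab'; have f4 := ba'; have f5 := bb'; have f6 := a'b'.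
have f7 := ba; have f8 := a'a; have f9 := b'a; have f10 := a'b; have f11 := b'b; have f12 := b'a'.
split.
- split.
  + by case=> [x|[[]|[]]] //=; rewrite H4.
  + by case=> [x|[[]|[]]] //=; rewrite inlE1 R2n.
  + case=> [x|[[]|[]]]; rewrite /=; try sv.
    split_on x a; last split_on x (rot a); last split_on x (edg a); last split_on x (edg (rot a));
      rewrite /= ?eqxx; try sv; rewrite ?edg_eqL ?E2; sv.
  + case=> [x|[[]|[]]]; rewrite /=; try sv.
    split_on x a; last split_on x (rot a); last split_on x (edg a); last split_on x (edg (rot a));
      rewrite /= ?eqxx; try sv.
- by split; case=> [x|[[]|[]]] //=.
- have step (u v : fd) : (v == frot u) || (v == fedg u) -> connect (@crel finger) u v.
    by move=> h; apply: connect1.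
  have st u v : (v == frot u) || (v == fedg u) -> connect (@crel finger) v (inl a) -> connect (@crel finger) u (inl a).
    by move=> h; apply: connect_trans (step _ _ h).
  have ts u v : (v == frot u) || (v == fedg u) -> connect (@crel finger) (inl a) u -> connect (@crel finger) (inl a) v.
    by move=> h h2; apply: connect_trans h2 (step _ _ h).
  have NF n : connect (@crel finger) (inr n) (inl a).
    have q0 : connect (@crel finger) (Q k0) (inl a) by apply: step; sv.
    have q3 : connect (@crel finger) (Q k3) (inl a) by apply: (st _ (Q k0)); sv.
    have q2 : connect (@crel finger) (Q k2) (inl a) by apply: (st _ (Q k3)); sv.
    have r0 : connect (@crel finger) (R k0) (inl a) by apply: (st _ (Q k2)); sv.
    have r3 : connect (@crel finger) (R k3) (inl a) by apply: (st _ (R k0)); sv.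
    have r2 : connect (@crel finger) (R k2) (inl a) by apply: (st _ (R k3)); sv.
    case: n => [[]|[]] //.
      by apply: (st _ (Q k2)); sv.
    by apply: (st _ (R k2)); sv.
  have NT n : connect (@crel finger) (inl a) (inr n).
    have q0 : connect (@crel finger) (inl a) (Q k0) by apply: step; sv.
    have q1 : connect (@crel finger) (inl a) (Q k1) by apply: (ts (Q k0)); sv.
    have q2 : connect (@crel finger) (inl a) (Q k2) by apply: (ts (Q k1)); sv.
    have r0 : connect (@crel finger) (inl a) (R k0) by apply: (ts (Q k2)); sv.
    have r1 : connect (@crel finger) (inl a) (R k1) by apply: (ts (R k0)); sv.
    have r2 : connect (@crel finger) (inl a) (R k2) by apply: (ts (R k1)); sv.
    case: n => [[]|[]] //.
      by apply: (ts (Q k2)); sv.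
    by apply: (ts (R k2)); sv.
  have viaN x n m : inl x = (fedg (inr m)) -> connect (@crel finger) (inl a) (inr m).
    by move=> _; apply: NT.
  have L : forall x y, connect (@crel D) x y -> connect (@crel finger) (inl x) (inl y).
    apply: lift_connect => x y /orP[/eqP ->|/eqP ->]; first by apply: step; rewrite /= eqxx.
    have go n m : fedg (inl x) = inr n -> fedg (inr m) = inl (edg x) ->
        connect (@crel finger) (inl x) (inl (edg x)).
      move=> h1 h2; apply: connect_trans (step (inl x) (inr n) _) _; first by rewrite h1 eqxx orbT.
      apply: connect_trans (NF n) _; apply: connect_trans (NT m) _.
      by apply: step; rewrite h2 eqxx orbT.
    split_on x a; last split_on x (rot a); last split_on x (edg a); last split_on x (edg (rot a)).
    + by apply: (go (inl k0) (inr k2)); rewrite /= ?eqxx.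
    + by apply: (go (inl k3) (inr k3)); rewrite /= ?eqxx; sv.
    + by apply: (go (inr k2) (inl k0)); rewrite /= ?eqxx; sv.
    + by apply: (go (inr k3) (inl k3)); rewrite /= ?eqxx; sv.
    + by apply: step; apply/orP; right; sv.
  have To u : connect (@crel finger) (inl a) u by case: u => [x|n]; [apply: L|apply: NT].
  have From u : connect (@crel finger) u (inl a) by case: u => [x|n]; [apply: L|apply: NF].
  by move=> u v; apply: connect_trans (From u) (To v).
- by rewrite finger_faces card_sum card_sum card_K4; apply: arith_f2.
- by rewrite finger_straight.
Qed.
Lemma R2_finger (o : fd -> bool) : (forall x, o (inl x) = ovr x) -> o (Q k2) = o (R k0) ->
  R2 (fingerO o) D.
Proof.
move=> Ho Hq.
have f1 := ab; have f2 := aa'; have f3 := ab'; have f4 := ba'; have f5 := bb'; have f6 := a'b'.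
have f7 := ba; have f8 := a'a; have f9 := b'a; have f10 := a'b; have f11 := b'b; have f12 := b'a'.
exists (Q k2); split => //.
exists inl; split => //.
- by move=> x y [].
- split; first by case=> [x|[[]|[]]]; [right; exists x|left..].
  by [].
- move=> x.
  split_on x a; last split_on x (rot a); last split_on x (edg a); last split_on x (edg (rot a)).
  all: try (exists 2; split; first by rewrite /= /fstraight /= ?eqxx; sv).
  all: try (case=> [|[|j]] // _; rewrite /= /fstraight /vtx /= ?eqxx; sv).
  by exists 0; split => //; rewrite /=; sv.
Qed.
End Finger.

Lemma vtx_kink_inl (D : diag) (e : dart D) o (y x : dart D) :
  @vtx (kinkO e o) (inl y) (inl x) = vtx y x.
Proof. by rewrite /vtx /= !inlE1. Qed.

Lemma vtx_kink_inr (D : diag) (e : dart D) o (k : K4) (x : dart D) :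
  @vtx (kinkO e o) (inr k) (inl x) = false.
Proof. by []. Qed.

Lemma vtx_finger_inl (D : diag) (a : dart D) o (y x : dart D) :
  @vtx (fingerO a o) (inl y) (inl x) = vtx y x.
Proof. by rewrite /vtx /= !inlE1. Qed.

Lemma vtx_closed (D : diag) (d : dart D) : valid2 D -> forall x, vtx d (rot x) = vtx d x.
Proof. by case=> [[H4 _ _ _] _ _ _ _] x; rewrite vtx_rot. Qed.

Lemma good_dart (D : diag) (d : dart D) : valid2 D -> exists a, vtx d a /\ edg a != rot a.
Proof.
case=> [[H4 R2 E2 E1] _ _ _ _].
case: (edg d =P rot d) => [h|h]; last by exists d; split; [apply: vtx_self|apply/eqP].
exists (rot d); split; first by rewrite /vtx eqxx orbT.
have -> : edg (rot d) = d by rewrite -h E2.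
by rewrite eq_sym.
Qed.

Lemma req_trans (x y z : diag) : req x y -> req y z -> req x z.
Proof. exact: rst_trans. Qed.
Lemma req_sym (x y : diag) : req x y -> req y x.
Proof. exact: rst_sym. Qed.
Lemma req_refl (x : diag) : req x x.
Proof. exact: rst_refl. Qed.

Section Gadget.
Variables (E : diag) (a : dart E).
Hypothesis V : valid2 E.
Hypothesis Ha : edg a != rot a.
Definition F1 := finger a.
Definition eQ0 : dart F1 := inr (inl k0).
Definition F2 := kink eQ0.
Definition eN1 : dart F2 := inr k1.
Definition F3 := kink eN1.
Definition tt0 : dart F3 := inl (inl (inl (rot a))).
Definition tt2 : dart F3 := inl (inr k1).
Definition F3' := flip F3 (fun y => vtx tt0 y || vtx tt2 y).

Let V1 : valid2 F1 := valid2_finger V Ha.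
Let V2 : valid2 F2 := valid2_kink eQ0 V1.
Let V3 : valid2 F3 := valid2_kink eN1 V2.
Let V3' : valid2 F3'.
Proof.
apply: valid2_flip V3 _ => x; by rewrite !(vtx_closed _ V3).
Qed.

Let ba : (rot a == a) = false.
Proof.
case: V => [[H4 R2 _ _] _ _ _ _]; apply: negbTE; apply/eqP => h.
by move: (R2 a); rewrite h h eqxx.
Qed.
Let ab : (a == rot a) = false. Proof. by rewrite eq_sym. Qed.

Definition tt1 : dart F3 := inl (inl (inr (inl k0))).
Definition tt3 : dart F3 := inr k1.

Ltac cmp := do 8 (rewrite ?inlE1 ?inrE1 ?inlrE1 ?inrlE1 ?eqxx /=; hypfalse).

Lemma gadget_D : Dmove F3 F3'.
Proof.
have f1 := ba; have f2 := ab.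
have e1 : fface tt0 = tt1 by rewrite /fface /=; cmp.
have e2 : fface tt1 = tt2 by rewrite /fface /=; cmp.
have e3 : fface tt2 = tt3 by rewrite /fface /=; cmp.
have e4 : fface tt3 = tt0 by rewrite /fface /=; cmp.
split; first exact: valid2_valid V3.
split; first exact: valid2_valid V3'.
exists tt0; cbv zeta; rewrite e1 e2 e3 e4.
split => //.
- rewrite /vtx /=; cmp.
- exists (fun x => x); split => //.
  by exists (fun x => x).
Qed.
Lemma rstep_of (D1 D2 : diag) : valid2 D1 -> valid2 D2 ->
  [\/ iso D1 D2, R1 D1 D2 \/ R1 D2 D1, R2 D1 D2 \/ R2 D2 D1 | R3 D1 D2 \/ R3 D2 D1] -> req D1 D2.
Proof. by move=> h1 h2 h; apply: rst_step; split; [apply: valid2_valid|split; [apply: valid2_valid|]]. Qed.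

Lemma req_E_F3 : req E F3.
Proof.
have h1 : R2 F1 E := R2_finger V Ha (o := @fovr E) (fun _ => erefl) erefl.
have h2 := rstep_of V V1 (@Or43 _ _ _ _ (or_intror h1)).
apply: req_trans h2 _.
apply: req_trans (rstep_of V1 V2 (@Or42 _ _ _ _ (or_intror (R1_kink eQ0 V1 (o := @kovr F1) (fun _ => erefl))))) _.
exact: (rstep_of V2 V3 (@Or42 _ _ _ _ (or_intror (R1_kink eN1 V2 (o := @kovr F2) (fun _ => erefl))))).
Qed.

Definition F2f := flip F2 (fun y => vtx (inl (inl (rot a)) : dart F2) y || vtx eN1 y).
Definition F1f := flip F1 (vtx (inl (rot a) : dart F1)).
Definition Ef := flip E (vtx (rot a)).

Let V2f : valid2 F2f.
Proof. apply: valid2_flip V2 _ => x; by rewrite !(vtx_closed _ V2). Qed.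
Let V1f : valid2 F1f.
Proof. apply: valid2_flip V1 _ => x; by rewrite !(vtx_closed _ V1). Qed.
Let Vf : valid2 Ef.
Proof. apply: valid2_flip V _ => x; by rewrite !(vtx_closed _ V). Qed.

Lemma req_F3'_Ef : req F3' Ef.
Proof.
have r1 : R1 F3' F2f.
  apply: (R1_kink (D := F2f) eN1 V2f (o := ovr (d := F3'))) => x.
  by rewrite /= /tt0 /tt2 !vtx_kink_inl.
have r2 : R1 F2f F1f.
  apply: (R1_kink (D := F1f) eQ0 V1f (o := ovr (d := F2f))) => x.
  by rewrite /= !vtx_kink_inl vtx_kink_inr orbF.
have r3 : R2 F1f Ef.
  apply: (R2_finger (D := Ef) Vf Ha (o := ovr (d := F1f))) => [x|].
    by rewrite /= vtx_finger_inl.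
  by [].
apply: req_trans (rstep_of V3' V2f (@Or42 _ _ _ _ (or_introl r1))) _.
apply: req_trans (rstep_of V2f V1f (@Or42 _ _ _ _ (or_introl r2))) _.
exact: (rstep_of V1f Vf (@Or43 _ _ _ _ (or_introl r3))).
Qed.
Lemma req_Ef_E' (E' : diag) (d : dart E) : vtx d a -> flipped E E' (vtx d) -> valid E' -> req Ef E'.
Proof.
move=> da [f [fb fr fe fo]] vE'.
have [[H4 _ _ _] _ _ _ _] := V.
have V' : valid2 E' := valid_valid2 (f d) vE'.
apply: rstep_of Vf V' _; apply: Or41.
exists f; split.
- exact: bij_inj.
- split => // y; right; case: fb => g _ gK; by exists (g y).
- by move=> x; rewrite fr.
- move=> x; rewrite fo /= vtx_rot2 //; congr (_ (+) _).
  by rewrite (vtx_same H4 da).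
- by move=> x; exists 0; split => //; rewrite fe.
Qed.
End Gadget.

Lemma xmove_to_d (E E' : diag) : Xmove E E' -> exists F F', [/\ req E F, Dmove F F' & req F' E'].
Proof.
case=> vE [vE' [d fl]].
have V := valid_valid2 d vE.
have [a [da Ha]] := good_dart d V.
exists (F3 a), (F3' a); split.
- exact: req_E_F3 V Ha.
- exact: gadget_D V Ha.
- exact: req_trans (req_F3'_Ef V Ha) (req_Ef_E' V da fl vE').
Qed.

Lemma dmove_split (E E' : diag) : Dmove E E' -> exists M, Xmove E M /\ Xmove M E'.
Proof.
case=> vE [vE' [t [_ dist [f [fb fr fe fo]]]]].
have V := valid_valid2 t vE.
have [[H4 _ _ _] _ _ _ _] := V.
set t2 := fface (fface t) in dist fo *.
have Vm : valid2 (flip E (vtx t)).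
  apply: (valid2_flip V) => x; by rewrite (vtx_closed _ V).
exists (flip E (vtx t)); split.
  split => //; split; first exact: valid2_valid Vm.
  exists t; exists (fun x => x); split => //.
  by exists (fun x => x).
split; first exact: valid2_valid Vm.
split => //.
exists t2; exists f; split => // x.
rewrite fo /=.
have nd : ~~ (vtx t x && vtx t2 x).
  apply/andP => -[h1 h2].
  have : vtx t t2 by rewrite -(vtx_same H4 h1) (vtx_same H4 h2) vtx_self.
  by move: dist; case/and5P => _ /negbTE -> .
have Hb (o b c : bool) : ~~ (b && c) -> o (+) (b || c) = o (+) b (+) c by case: b; case: c; case: o.
exact: Hb _ _ _ nd.
Qed.

Lemma reach_req M k (A B C : diag) : req A B -> reach M k B C -> reach M k A C.
Proof.
case: k => [|k] /= h; first exact: req_trans h.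
by case=> [E [E' [h1 h2 h3]]]; exists E, E'; split => //; apply: req_trans h h1.
Qed.

Lemma reachX_D k (D D' : diag) : reach Xmove k D D' -> reach Dmove k D D'.
Proof.
elim: k D => [|k IH] D //= [E [E' [h1 h2 h3]]].
have [F [F' [r1 dm r2]]] := xmove_to_d h2.
exists F, F'; split => //; first exact: req_trans h1 r1.
by apply: reach_req r2 (IH _ h3).
Qed.

Lemma reachD_X k (D D' : diag) : reach Dmove k D D' -> reach Xmove (2 * k) D D'.
Proof.
elim: k D => [|k IH] D; first by [].
rewrite mulnS add2n => -[E [E' [h1 h2 h3]]].
have [M [x1 x2]] := dmove_split h2.
exists E, M; split => //.
exists M, E'; split => //; first exact: req_refl.
exact: IH.
Qed.

Theorem mainTheorem6 (D D' : diag) (HD : valid D) (HD' : valid D') :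
  forall n : nat,
    (dist_le Xmove D D' n -> dist_le Dmove D D' n) /\
    (dist_le Dmove D D' n -> dist_le Xmove D D' (2 * n)).
Proof.
move=> n; split.
  by case=> k [kn r]; exists k; split => //; apply: reachX_D.
case=> k [kn r]; exists (2 * k); split; first by rewrite leq_mul2l kn orbT.
exact: reachD_X.
Qed.
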